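(* Let $F$, $\hat F$, $\alpha_1,\dots,\alpha_n$ and $\pi: H_1(\hat F,\mathbb{Z})\to H_1(F,\mathbb{Z})$ be as in the context. For every automorphism $\varphi: H_1(F,\mathbb{Z})\to H_1(F,\mathbb{Z})$ there is an automorphism $\tilde\varphi: H_1(\hat F,\mathbb{Z})\to H_1(\hat F,\mathbb{Z})$ with $\pi\circ\tilde\varphi=\varphi\circ\pi$ and $\tilde\varphi\left(\sum_{i=1}^n\alpha_i\right)=\sum_{i=1}^n\alpha_i$.
   Context: $F$ is a closed connected non-orientable surface with Euler characteristic $\chi(F)=2-n$, $n\ge 1$, written as a connected sum of $n$ projective planes. $\hat F$ is obtained from $F$ by deleting the interior of an embedded disc, so $\hat F$ is a boundary-connected sum of $n$ Möbius bands $\mathcal{M}_1,\dots,\mathcal{M}_n$. Let $\gamma_i$ be the core (central) circle of $\mathcal{M}_i$ and $\alpha_i=[\gamma_i]\in H_1(\hat F,\mathbb{Z})$ (for some choice of orientation). Then $H_1(\hat F,\mathbb{Z})\cong\mathbb{Z}^n$ with basis $\alpha_1,\dots,\alpha_n$, and the map $\pi:H_1(\hat F,\mathbb{Z})\to H_1(F,\mathbb{Z})$ induced by inclusion is surjective with kernel generated by $2\sum_i\alpha_i$ (the class of the boundary circle), so $H_1(F,\mathbb{Z})=H_1(\hat F,\mathbb{Z})/\langle 2\sum_i\alpha_i\rangle$. *)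

(* Defs.v *)
From HB Require Import structures.
From mathcomp Require Import all_boot all_order all_algebra.
Set Implicit Arguments. Unset Strict Implicit. Unset Printing Implicit Defensive.
Import GRing.Theory.
Local Open Scope ring_scope.

(* H_1(\hat F, Z) = Z^n, modelled as integer row vectors; alpha i is the
   i-th standard basis vector (class of the core circle of M_i). *)
Definition H1hat (n : nat) := 'rV[int]_n.
Definition alpha (n : nat) (i : 'I_n) : 'rV[int]_n := delta_mx 0 i.
Definition alpha_sum (n : nat) : 'rV[int]_n := \sum_(i < n) alpha i.

Definition is_hom (G H : zmodType) (f : G -> H) : Prop :=
  forall x y, f (x + y) = f x + f y.

Definition is_aut (G : zmodType) (f : G -> G) : Prop :=
  is_hom f /\ bijective f.

(* Main.v *)
Require Import Defs.
From HB Require Import structures.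
From mathcomp Require Import all_boot all_order all_algebra.
From mathcomp Require Import zify.
Import GRing.Theory.
Local Open Scope ring_scope.

Lemma hom0 {G H : zmodType} {f : G -> H} : is_hom f -> f 0 = 0.
Proof.
move=> hf; have := hf 0 0; rewrite addr0 => E.
by apply: (@addrI _ (f 0)); rewrite addr0 -E.
Qed.

Lemma homN {G H : zmodType} {f : G -> H} : is_hom f -> forall x, f (- x) = - f x.
Proof.
move=> hf x; have := hf x (- x); rewrite subrr hom0 // => E.
by apply: (@addrI _ (f x)); rewrite -E subrr.
Qed.

Lemma homB {G H : zmodType} {f : G -> H} : is_hom f -> forall x y, f (x - y) = f x - f y.
Proof. by move=> hf x y; rewrite hf homN. Qed.

Lemma homMn {G H : zmodType} {f : G -> H} : is_hom f -> forall x m, f (x *+ m) = f x *+ m.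
Proof.
move=> hf x; elim=> [|m IH]; first by rewrite !mulr0n hom0.
by rewrite !mulrS hf IH.
Qed.

Lemma homMz {G H : zmodType} {f : G -> H} : is_hom f -> forall x k, f (x *~ k) = f x *~ k.
Proof.
move=> hf x.
have P m : f (x *~ m%:Z) = f x *~ m%:Z by rewrite -!pmulrn homMn.
case=> m; first exact: P.
by rewrite NegzE !mulrNz homN // P.
Qed.

Lemma homsum {G H : zmodType} {f : G -> H} : is_hom f ->
  forall (I : Type) (r : seq I) (P : pred I) (F : I -> G),
  f (\sum_(i <- r | P i) F i) = \sum_(i <- r | P i) f (F i).
Proof. by move=> hf; apply: big_morph; [exact: hf | exact: hom0]. Qed.

Lemma mxz_entry n (x : 'rV[int]_n) k j : (x *~ k) 0 j = x 0 j * k.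
Proof. by rewrite -scaler_int mxE intz mulrC. Qed.

Lemma mxn2_entry n (x : 'rV[int]_n) j : (x *+ 2) 0 j = x 0 j + x 0 j.
Proof. by rewrite !mxE. Qed.

Lemma alpha_sumE n j : alpha_sum n 0 j = 1.
Proof.
rewrite /alpha_sum summxE (bigD1 j) //= big1 => [|i ij].
  by rewrite /alpha mxE !eqxx addr0.
by rewrite /alpha mxE eq_sym (negbTE ij) andbF.
Qed.

Lemma zmod_aux (V : zmodType) (a b s : V) : a - (a + b - s) + b = s.
Proof.
apply/eqP; rewrite -subr_eq0 !opprD !opprK.
by rewrite -!addrA addrCA addKr addrCA addKr subrr.
Qed.

Theorem lemma2p1 (n : nat) (hn : (1 <= n)%N) (G : zmodType)
    (pi : 'rV[int]_n -> G)
    (pi_hom : is_hom pi)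
    (pi_surj : forall g : G, exists x, pi x = g)
    (pi_ker : forall x, pi x = 0 <-> exists k : int, x = (alpha_sum n *+ 2) *~ k)
    (phi : G -> G) (phi_aut : is_aut phi) :
  exists phit : 'rV[int]_n -> 'rV[int]_n,
    [/\ is_aut phit,
        forall x, pi (phit x) = phi (pi x)
      & phit (alpha_sum n) = alpha_sum n].
Proof.
case: n hn pi pi_hom pi_surj pi_ker => [//|m] _ pi pi_hom pi_surj pi_ker.
set s := alpha_sum m.+1.
have s2 : pi (s *+ 2) = 0 by apply/pi_ker; exists 1; rewrite mulr1z.
have t2 : pi s *+ 2 = 0 by rewrite -homMn.
have tn0 : pi s != 0.
  apply/eqP => /pi_ker [k E].
  have := congr1 (fun v : 'rV[int]_m.+1 => v 0 ord0) E.
  rewrite /= mxz_entry mxn2_entry /s !alpha_sumE; lia.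
have T : forall ph : G -> G, is_aut ph -> ph (pi s) = pi s.
  move=> ph [phh [phi' c1 c2]].
  have [x Ex] := pi_surj (ph (pi s)).
  have : pi (x *+ 2) = 0 by rewrite homMn // Ex -homMn // t2 hom0.
  move=> /pi_ker [k Ek].
  have xE : x = s *~ k.
    apply/matrixP => i j; rewrite ord1 mxz_entry /s alpha_sumE mul1r.
    have := congr1 (fun v : 'rV[int]_m.+1 => v 0 j) Ek.
    rewrite /= mxz_entry !mxn2_entry /s alpha_sumE; lia.
  have Eph : ph (pi s) = pi s *~ (k %% 2)%Z.
    rewrite -Ex xE homMz // {1}(divz_eq k 2) mulrzDr mulrC mulrzA.
    have -> : pi s *~ 2 = 0 by exact: t2.
    by rewrite mul0rz add0r.
  have r0 := @modz_ge0 k 2 isT; have r2 := @ltz_pmod k 2 isT.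
  have [r|r] : (k %% 2)%Z = 0 \/ (k %% 2)%Z = 1 by lia.
    exfalso; move/eqP: tn0; apply.
    by rewrite -[pi s]c1 Eph r mulr0z -{1}(hom0 phh) c1.
  by rewrite Eph r mulr1z.
have L : forall ph : G -> G, is_aut ph -> exists f : 'rV[int]_m.+1 -> 'rV[int]_m.+1,
    [/\ is_hom f, forall x, pi (f x) = ph (pi x) & f s = s].
  move=> ph phA; have phh := phA.1.
  have ex g : exists x, pi x == g by have [x Ex] := pi_surj g; exists x; rewrite Ex.
  pose y (i : 'I_m.+1) := xchoose (ex (ph (pi (alpha i)))).
  have yE i : pi (y i) = ph (pi (alpha i)) by apply/eqP; exact: (xchooseP (ex (ph (pi (alpha i))))).
  pose d := \sum_i y i - s.
  pose y' (i : 'I_m.+1) := if i == ord0 then y i - d else y i.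
  have pd : pi d = 0.
    rewrite /d (homB pi_hom) (homsum pi_hom).
    under eq_bigr => i _ do rewrite yE.
    by rewrite -(homsum phh) -(homsum pi_hom) -/(alpha_sum m.+1) -/s T // subrr.
  have y'E i : pi (y' i) = ph (pi (alpha i)).
    rewrite /y'; case: (i == ord0); last exact: yE.
    by rewrite (homB pi_hom) yE pd subr0.
  have sy' : \sum_i y' i = s.
    rewrite (bigD1 ord0) //= /y' eqxx.
    rewrite (eq_bigr y) => [|i /negbTE -> //].
    rewrite /d (bigD1 ord0) //=.
    exact: zmod_aux.
  exists (fun x => \sum_i y' i *~ x 0 i); split.
  - move=> x1 x2; rewrite -big_split; apply: eq_bigr => i _.
    by rewrite mxE mulrzDr.
  - move=> x; rewrite (homsum pi_hom).
    under eq_bigr => i _ do rewrite (homMz pi_hom) y'E.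
    rewrite {2}[x]row_sum_delta (homsum pi_hom) (homsum phh).
    apply: eq_bigr => i _; by rewrite -[x 0 i]intz scaler_int intz (homMz pi_hom) (homMz phh).
  - rewrite -[RHS]sy'; apply: eq_bigr => i _.
    by rewrite /s alpha_sumE mulr1z.
have M : forall h : 'rV[int]_m.+1 -> 'rV[int]_m.+1, is_hom h ->
    (forall x, pi (h x) = pi x) -> h s = s -> bijective h.
  move=> h hh hpi hs.
  have K x : h (h x - x) = h x - x.
    have : pi (h x - x) = 0 by rewrite (homB pi_hom) hpi subrr.
    by move=> /pi_ker [k ->]; rewrite (homMz hh) (homMn hh) hs.
  exists (fun x => x - (h x - x)) => x.
    by rewrite -(homB hh) K opprB addrC subrK.
  by rewrite (homB hh) K opprB addrC subrK.
have [phh [psi c1 c2]] := phi_aut.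
have psih : is_hom psi.
  by move=> a b; rewrite -{1}(c2 a) -{1}(c2 b) -phh c1.
have psiA : is_aut psi by split=> //; exists phi.
have [f [fh fpi fs]] := L _ phi_aut.
have [g [gh gpi gs]] := L _ psiA.
have [u u1 u2] : bijective (f \o g).
  apply: M => /=; first by move=> a b /=; rewrite gh fh.
    by move=> x; rewrite fpi gpi c2.
  by rewrite gs fs.
have [v v1 v2] : bijective (g \o f).
  apply: M => /=; first by move=> a b /=; rewrite fh gh.
    by move=> x; rewrite gpi fpi c1.
  by rewrite fs gs.
exists f; split => //; split => //.
exists (g \o u) => x /=; last exact: u2.
by rewrite -[g (u (f x))]v1 /= (u2 (f x) : f (g (u (f x))) = f x) (v1 x).
Qed.
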